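(* For an integer $\ell\ge 1$ and $1\le u\le \ell^3$ let $c_u(\ell):=\#\{(a,b,c)\in\{1,\dots,\ell\}^3:\ abc=u\}$, and set $$C_3(\ell):=\sum_{\substack{u,v\le \ell^3\\ uv \text{ is a perfect square}}} c_u(\ell)c_v(\ell).$$ Then for every $\delta>0$ one has $C_3(m)\ll_\delta m^{3+\delta}$ for all integers $m\ge 1$.
   Context: $f\ll_\delta g$ means $|f|\le C g$ for a constant $C$ depending only on $\delta$ (for all sufficiently large $m$). *)

(* Defs.v *)
From mathcomp Require Import all_boot.
From Stdlib Require Import Reals.

Definition is_square (n : nat) : bool := [exists k : 'I_n.+1, (k * k == n)%N].

Definition c_count (u l : nat) : nat :=
  (\sum_(1 <= a < l.+1) \sum_(1 <= b < l.+1) \sum_(1 <= c < l.+1)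
      ((a * b * c)%N == u : nat))%N.

Definition C3 (l : nat) : nat :=
  (\sum_(1 <= u < (l ^ 3).+1) \sum_(1 <= v < (l ^ 3).+1 | is_square (u * v))
      c_count u l * c_count v l)%N.

(* Main.v *)
Require Import Defs.
From mathcomp Require Import all_boot.
From Stdlib Require Import Reals.
From Stdlib Require Import Lia Lra.
From mathcomp Require Import zify.

Lemma sum_count (T : Type) (r : seq T) (A : pred T) :
  \sum_(i <- r) (A i : nat) = count A r.
Proof. elim: r => [|x r IH]; by rewrite ?big_nil ?big_cons ?IH. Qed.

Lemma count_reindex (I J : eqType) (r1 : seq I) (r2 : seq J)
  (A : pred I) (B : pred J) (f : J -> I) :
  uniq r1 ->
  (forall i, i \in r1 -> A i -> exists j, [/\ j \in r2, B j & f j = i]) ->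
  count A r1 <= count B r2.
Proof.
move=> u1 H; rewrite -!size_filter -(size_map f).
apply: uniq_leq_size; first exact: filter_uniq.
move=> i; rewrite mem_filter => /andP[Ai ir1].
have [j [jr Bj fj]] := H i ir1 Ai.
by apply/mapP; exists j; rewrite ?mem_filter ?Bj ?jr // fj.
Qed.

Lemma sum_eq_le1 (r : seq nat) x : uniq r -> \sum_(i <- r) (i == x : nat) <= 1.
Proof.
move=> ur; rewrite (@sum_count _ r (pred1 x)) count_uniq_mem //; exact: leq_b1.
Qed.

Definition tau n := \sum_(0 <= d < n.+1) (d %| n : nat).

Lemma tau_count n : tau n = count (fun d => d %| n) (index_iota 0 n.+1).
Proof. by rewrite /tau sum_count. Qed.

Lemma range_le_tau u lo hi : 0 < u ->
  \sum_(lo <= d < hi) (d %| u : nat) <= tau u.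
Proof.
move=> u0; rewrite sum_count tau_count.
apply: (@count_reindex nat nat _ _ _ _ (fun x : nat => x)); first exact: iota_uniq.
all: try exact: iota_uniq.
move=> i _ di; exists i; split => //.
by rewrite mem_index_iota /= ltnS dvdn_leq.
Qed.

Lemma tau_mul a b : 0 < a -> 0 < b -> tau (a * b) <= tau a * tau b.
Proof.
move=> a0 b0.
have -> : tau a * tau b =
  count (fun p : nat * nat => (p.1 %| a) && (p.2 %| b))
        [seq (x, y) | x <- index_iota 0 a.+1, y <- index_iota 0 b.+1].
  rewrite -sum_count big_allpairs /tau big_distrl /=.
  apply: eq_bigr => x _; rewrite big_distrr /=.
  by apply: eq_bigr => y _; rewrite mulnb.
rewrite tau_count.
apply: (@count_reindex _ _ _ _ _ _ (fun p => p.1 * p.2)); first exact: iota_uniq.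
move=> d _ dab.
have d0 : 0 < d by apply: dvdn_gt0 dab; rewrite muln_gt0 a0.
set g := gcdn d a.
have gd : g %| d by exact: dvdn_gcdl.
have ga : g %| a by exact: dvdn_gcdr.
have g0 : 0 < g by rewrite gcdn_gt0 d0.
have yb : d %/ g %| b.
  have : lcmn d a %| a * b by rewrite dvdn_lcm dab dvdn_mulr.
  rewrite /lcmn -/g -divn_mulAC // mulnC dvdn_pmul2l //.
exists (g, d %/ g); split; last by rewrite /= mulnC divnK.
  apply/allpairsP; exists (g, d %/ g); split => //=;
  rewrite mem_index_iota /= ltnS dvdn_leq //.
by rewrite ga yb.
Qed.

Lemma tau_pow p e : prime p -> tau (expn p e) <= e.+1.
Proof.
move=> pp; rewrite tau_count.
rewrite -(size_iota 0 e.+1) -count_predT.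
apply: (@count_reindex nat nat _ _ _ _ (fun i => expn p i)); first exact: iota_uniq.
move=> d _ /(dvdn_pfactor _ _ pp) [i ie ->]; exists i; split => //.
by rewrite mem_iota ltnS ie.
Qed.

Lemma tau1 : tau 1 = 1.
Proof. by rewrite /tau !big_nat_recr //= big_geq. Qed.

Lemma tau_prod (s : seq (nat * nat)) : (forall f, f \in s -> prime f.1) ->
  tau (\prod_(f <- s) expn f.1 f.2) <= \prod_(f <- s) f.2.+1.
Proof.
elim: s => [|f s IH] H; first by rewrite !big_nil tau1.
rewrite !big_cons.
have pf : prime f.1 by apply: H; rewrite mem_head.
apply: leq_trans (tau_mul _ _ _ _) _.
- by rewrite expn_gt0 prime_gt0.
- rewrite big_seq prodn_cond_gt0 // => g gs; by rewrite expn_gt0 prime_gt0 // H // in_cons gs orbT.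
apply: leq_mul; first exact: tau_pow.
by apply: IH => g gs; apply: H; rewrite in_cons gs orbT.
Qed.

Lemma keyE K e : 0 < K -> expn e.+1 K <= expn K K * expn 2 e.
Proof.
move=> K0.
have h1 : e.+1 <= K * (e %/ K).+1.
  by rewrite mulnS {1}(divn_eq e K) mulnC addnC ltn_add2r ltn_pmod.
have h2 : (e %/ K).+1 <= expn 2 (e %/ K) by exact: ltn_expl.
apply: (@leq_trans (expn (K * expn 2 (e %/ K)) K)).
  rewrite leq_exp2r //; apply: leq_trans h1 _; exact: leq_mul.
rewrite expnMn leq_mul2l; apply/orP; right.
rewrite -expnM leq_exp2l //. exact: leq_divM.
Qed.

Lemma factor_bound K p e : 0 < K -> prime p ->
  expn e.+1 K <= expn (expn K K) (p < expn 2 K) * expn p e.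
Proof.
move=> K0 pp; have p2 := prime_gt1 pp.
case: ltnP => hp /=.
  rewrite expn1; apply: leq_trans (keyE K e K0) _.
  rewrite leq_mul2l; apply/orP; right.
  by case: e => // e; rewrite leq_exp2r.
rewrite mul1n; apply: (@leq_trans (expn (expn 2 e) K)).
  by rewrite leq_exp2r // ltn_expl.
rewrite -expnM mulnC expnM; case: e => [|e]; first by rewrite !expn0.
by rewrite leq_exp2r.
Qed.

Lemma prod_pow_bound K (s : seq (nat * nat)) : 0 < K ->
  (forall f, f \in s -> prime f.1) ->
  expn (\prod_(f <- s) f.2.+1) K <=
  expn (expn K K) (count (fun f => f.1 < expn 2 K) s) * \prod_(f <- s) expn f.1 f.2.
Proof.
move=> K0; elim: s => [|f s IH] H; first by rewrite !big_nil /= exp1n.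
rewrite !big_cons /= expnMn expnD mulnACA.
apply: leq_mul; first by apply: factor_bound => //; apply: H; rewrite mem_head.
by apply: IH => g gs; apply: H; rewrite in_cons gs orbT.
Qed.

Lemma count_small K n : count (fun f : nat * nat => f.1 < expn 2 K) (prime_decomp n) <= expn 2 K.
Proof.
have -> : count (fun f : nat * nat => f.1 < expn 2 K) (prime_decomp n) =
          count (fun p => p < expn 2 K) (primes n) by rewrite /primes /unzip1 count_map.
rewrite -{2}(size_iota 0 (expn 2 K)) -count_predT.
apply: (@count_reindex nat nat _ _ _ _ (fun x : nat => x)); first exact: primes_uniq.
by move=> i _ hi; exists i; split => //; rewrite mem_iota.
Qed.

Lemma divisor_bound K n : 0 < K -> 0 < n ->
  expn (tau n) K <= expn (expn K K) (expn 2 K) * n.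
Proof.
move=> K0 n0.
have Hp : forall f, f \in prime_decomp n -> prime f.1.
  by case=> p e /mem_prime_decomp [].
apply: (@leq_trans (expn (\prod_(f <- prime_decomp n) f.2.+1) K)).
  by rewrite leq_exp2r // {1}(prod_prime_decomp n0); apply: tau_prod.
apply: leq_trans (prod_pow_bound K _ K0 Hp) _.
rewrite -(prod_prime_decomp n0) leq_mul2r; apply/orP; right.
apply: leq_pexp2l; last exact: count_small.
by rewrite expn_gt0 K0.
Qed.

Lemma c_count_bound u m : 0 < u -> c_count u m <= tau u * tau u.
Proof.
move=> u0; rewrite /c_count.
apply: (@leq_trans (\sum_(1 <= a < m.+1) \sum_(1 <= b < m.+1) ((a %| u) * (b %| u)))).
  apply: leq_sum => a _; apply: leq_sum => b _.
  have pt : forall c, (a * b * c == u : nat) <= ((a %| u) * (b %| u)) * (c == u %/ (a * b)).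
    move=> c; case: eqP => // h.
    have ab0 : 0 < a * b by move: u0; rewrite -h; case: (a * b).
    have -> : a %| u by rewrite -h -mulnA; apply/dvdn_mulr/dvdnn.
    have -> : b %| u by rewrite -h mulnAC; apply/dvdn_mull/dvdnn.
    by rewrite -h mulKn // eqxx.
  apply: (@leq_trans (\sum_(1 <= c < m.+1) ((a %| u) * (b %| u)) * (c == u %/ (a * b)))); first by apply: leq_sum => c _; exact: pt.
  rewrite -big_distrr /= -[X in _ <= X](muln1 (_ * _)) leq_mul2l; apply/orP; right.
  by apply: sum_eq_le1; exact: iota_uniq.
rewrite (eq_bigr (fun a => (a %| u) * \sum_(1 <= b < m.+1) (b %| u : nat))); last first.
  by move=> a _; rewrite big_distrr.
by rewrite -big_distrl /=; apply: leq_mul; apply: range_le_tau.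
Qed.

Lemma sum_const_cond (r : seq nat) (P : pred nat) X :
  \sum_(i <- r | P i) X = X * count P r.
Proof. by rewrite -sum1_count big_distrr /=; apply: eq_bigr => i _; rewrite muln1. Qed.

Lemma C3_nat m M T : 0 < m -> M = m ^ 3 ->
  T = \max_(1 <= n < (M * M).+1) tau n ->
  C3 m <= (T * T) * (T * T) * (M * T).
Proof.
move=> m0 eM eT.
have M0 : 0 < M by rewrite eM /=; nia.
have tauT : forall n, 1 <= n <= M * M -> tau n <= T.
  move=> n hn; rewrite eT; apply: (@leq_bigmax_seq nat (index_iota 1 (M * M).+1) xpredT tau n) => //.
  by rewrite mem_index_iota ltnS.
have cT : forall u, 1 <= u <= M -> c_count u m <= T * T.
  move=> u /andP[u1 uM]; apply: leq_trans (c_count_bound u m u1) _.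
  have h : tau u <= T by apply: tauT; rewrite u1 /=; apply: leq_trans uM _; rewrite leq_pmulr.
  exact: leq_mul.
apply: (@leq_trans (\sum_(1 <= u < M.+1) \sum_(1 <= v < M.+1 | is_square (u * v)) ((T * T) * (T * T)))).
  rewrite /C3 -eM big_seq [X in _ <= X]big_seq; apply: leq_sum => u.
  rewrite mem_index_iota ltnS => hu.
  rewrite big_seq_cond [X in _ <= X]big_seq_cond; apply: leq_sum => v /andP[].
  rewrite mem_index_iota ltnS => hv _.
  by apply: leq_mul; apply: cT.
rewrite (eq_bigr (fun u => (T * T) * (T * T) * count (fun v => is_square (u * v)) (index_iota 1 M.+1))); last first.
  by move=> u _; rewrite sum_const_cond.
rewrite -big_distrr /= leq_mul2l; apply/orP; right.
apply: (@leq_trans (\sum_(1 <= u < M.+1) \sum_(1 <= k < M.+1) (u %| k * k : nat))).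
  rewrite big_seq [X in _ <= X]big_seq; apply: leq_sum => u.
  rewrite mem_index_iota => /andP[u1 uM].
  rewrite sum_count.
  apply: (@count_reindex nat nat _ _ _ _ (fun k => k * k %/ u)); first exact: iota_uniq.
  move=> v; rewrite mem_index_iota => /andP[v1 vM] /existsP [k /eqP hk].
  exists (val k); split.
  - rewrite mem_index_iota; apply/andP; split.
      have hk2 : val k * val k = u * v := hk. nia.
    rewrite ltnS leqNgt; apply/negP => hkM.
    have : M.+1 * M.+1 <= val k * val k by apply: leq_mul.
    rewrite hk; have : u * v <= M * M by apply: leq_mul; lia.
    lia.
  - by rewrite hk dvdn_mulr.
  - by rewrite hk mulKn.
rewrite exchange_big_nat /=.
apply: (@leq_trans (\sum_(1 <= k < M.+1) T)); last first.
  by rewrite sum_nat_const_nat subn1.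
rewrite big_seq [X in _ <= X]big_seq; apply: leq_sum => k.
rewrite mem_index_iota => /andP[k1 kM].
apply: leq_trans (range_le_tau _ _ _ _) _; first by rewrite muln_gt0 k1.
apply: tauT; rewrite muln_gt0 k1 /=; apply: leq_mul; lia.
Qed.

Lemma expn_pow m n : expn m n = Nat.pow m n.
Proof. elim: n => [|n IH]; by rewrite ?expn0 // expnS IH. Qed.

Lemma T_bound K M T : 0 < K -> T = \max_(1 <= n < (M * M).+1) tau n ->
  expn T K <= expn (expn K K) (expn 2 K) * (M * M).
Proof.
move=> K0 ->; rewrite big_seq.
apply: (big_ind (fun x => expn x K <= expn (expn K K) (expn 2 K) * (M * M))).
- by rewrite exp0n.
- move=> x y hx hy; case/orP: (leq_total x y) => h.
    by rewrite (maxn_idPr h).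
  by rewrite (maxn_idPl h).
- move=> i; rewrite mem_index_iota ltnS => /andP[i1 iM].
  apply: leq_trans (divisor_bound K i K0 i1) _.
  by rewrite leq_mul2l iM orbT.
Qed.

Lemma real_step (X D N m : nat) (e : R) : (0 < N)%N -> (0 < m)%N ->
  (Nat.pow X N <= D * Nat.pow m (3 * N + 6))%N -> (0 < D)%N ->
  (6 * / INR N <= e)%R ->
  (INR X <= Rpower (INR D) (/ INR N) * Rpower (INR m) (3 + e))%R.
Proof.
move=> N0 m0 hX D0 he.
have Rpos : forall a b, (0 < Rpower a b)%R by move=> a b; rewrite /Rpower; apply: exp_pos.
have INRN : (0 < INR N)%R by apply: lt_0_INR; apply/ltP.
have INRm : (1 <= INR m)%R by apply: (le_INR 1); apply/leP.
have INRD : (0 < INR D)%R by apply: lt_0_INR; apply/ltP.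
case: (posnP X) => [-> | X0].
  rewrite /= ; apply: Rlt_le; apply: Rmult_lt_0_compat; apply: Rpos.
have INRX : (0 < INR X)%R by apply: lt_0_INR; apply/ltP.
have -> : INR X = Rpower (INR X ^ N) (/ INR N).
  rewrite -Rpower_pow // Rpower_mult Rinv_r; last by apply: Rgt_not_eq.
  by rewrite Rpower_1.
apply: Rle_trans (_ : Rpower (INR D * INR m ^ (3 * N + 6)) (/ INR N) <= _)%R.
  apply: Rle_Rpower_l; first by apply: Rlt_le; apply: Rinv_0_lt_compat.
  split; first by apply: pow_lt.
  rewrite -pow_INR -pow_INR -mult_INR; apply: le_INR; apply/leP; exact: hX.
rewrite -Rpower_mult_distr //; last by apply: pow_lt; lra.
apply: Rmult_le_compat_l; first by apply: Rlt_le.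
rewrite -Rpower_pow; last by lra.
rewrite Rpower_mult; apply: Rle_Rpower => //.
rewrite plus_INR mult_INR Rmult_plus_distr_r Rmult_assoc Rinv_r; last by apply: Rgt_not_eq.
have -> : INR 6 = 6%R by rewrite /= ; lra.
have -> : INR 3 = 3%R by rewrite /= ; lra.
lra.
Qed.

Theorem lemma2p3 :
  forall delta : R, (0 < delta)%R ->
  exists C : R, forall m : nat, (1 <= m)%N ->
    (INR (C3 m) <= C * Rpower (INR m) (3 + delta))%R.
Proof.
move=> delta hd.
have [N [hN N0]] := archimed_cor1 (delta / 6) ltac:(lra).
have N0' : (0 < N)%N by apply/ltP.
set K := (5 * N)%N.
have K0 : (0 < K)%N by rewrite /K; lia.
set D := expn (expn K K) (expn 2 K).
exists (Rpower (INR D) (/ INR N)) => m m1.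
apply: real_step => //; last first.
  lra.
  by rewrite /D !expn_gt0 K0.
set M := Nat.pow m 3.
set T := \max_(1 <= n < (M * M).+1) tau n.
have h1 := @C3_nat m M T m1 (erefl M) (erefl T) : C3 m <= _.
have h2 := @T_bound K M T K0 (erefl T).
rewrite -!expn_pow.
apply: (@leq_trans (expn (T * T * (T * T) * (M * T)) N)); first by rewrite leq_exp2r.
have -> : T * T * (T * T) * (M * T) = expn T 5 * M by rewrite !expnS expn0; lia.
rewrite expnMn -expnM -/K.
have -> : expn m (3 * N + 6) = M * M * expn M N.
  by rewrite /M -expn_pow -!expnM -!expnD; congr expn; lia.
by rewrite mulnA leq_mul2r h2 orbT.
Qed.
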